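(* Let $R$ be a semiring and $f:M\to N$ a morphism of $R$-modules. (1) $f$ is a normal monomorphism if and only if $f$ is injective and $f(M)$ is a saturated submodule of $N$. (2) $f$ is a normal epimorphism if and only if there is a saturated submodule $K$ of $M$ and an isomorphism $\varphi:M/K\to N$ such that $f=\varphi\circ\pi$, where $\pi:M\to M/K$ is the natural projection.
   Context: Semirings are commutative with $0,1$; an $R$-module is a commutative monoid with $R$-action. A submodule $N$ of $M$ is saturated if $x+y\in N$ and $y\in N$ imply $x\in N$. For a submodule $K\subseteq M$, $M/K$ is the set of classes of the congruence $x\sim y\iff x+k=y+k'$ for some $k,k'\in K$, with induced operations. A morphism $f:M\to N$ is a normal monomorphism if it is the equalizer of some morphism $g:N\to L$ and the zero map; it is a normal epimorphism if it is the coequalizer of some morphism $g:L\to M$ and the zero map. *)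

(* Defs.v *)
From HB Require Import structures.
From mathcomp Require Import all_boot all_algebra.
From mathcomp Require Import boolp.
Set Implicit Arguments. Unset Strict Implicit. Unset Printing Implicit Defensive.
Import GRing.Theory.
Local Open Scope ring_scope.

Section Defs.
Variable R : comPzSemiRingType.

Record submodule (M : lSemiModType R) := Submodule {
  smem :> M -> Prop;
  smem0 : smem 0;
  smemD : forall x y, smem x -> smem y -> smem (x + y);
  smemZ : forall (r : R) x, smem x -> smem (r *: x) }.

Definition saturated (M : lSemiModType R) (N : M -> Prop) : Prop :=
  forall x y, N (x + y) -> N y -> N x.

Definition kcongr (M : lSemiModType R) (K : M -> Prop) (x y : M) : Prop :=
  exists k k', K k /\ K k' /\ x + k = y + k'.

Section Quotient.
Variables (M : lSemiModType R) (K : submodule M).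

Definition quot : Type := {C : M -> Prop | exists x, C = kcongr K x}.

Definition qproj (x : M) : quot := exist _ (kcongr K x) (ex_intro _ x erefl).

Definition qrep (C : quot) : M := projT1 (cid (proj2_sig C)).

Lemma kcongr_refl x : kcongr K x x.
Proof. by exists 0, 0; split; [exact: smem0|split; [exact: smem0|]]. Qed.

Lemma kcongr_sym x y : kcongr K x y -> kcongr K y x.
Proof. by case=> k [k' [Hk [Hk' e]]]; exists k', k. Qed.

Lemma kcongr_trans x y z : kcongr K x y -> kcongr K y z -> kcongr K x z.
Proof.
case=> k [k' [Hk [Hk' e1]]] [l [l' [Hl [Hl' e2]]]].
exists (k + l), (k' + l'); split; first exact: smemD.
split; first exact: smemD.
by rewrite addrA e1 -addrA (addrC k' l) addrA e2 -addrA (addrC l').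
Qed.

Lemma kcongrD x y x' y' : kcongr K x x' -> kcongr K y y' ->
  kcongr K (x + y) (x' + y').
Proof.
case=> k [k' [Hk [Hk' e1]]] [l [l' [Hl [Hl' e2]]]].
exists (k + l), (k' + l'); split; first exact: smemD.
split; first exact: smemD.
have -> : x + y + (k + l) = (x + k) + (y + l).
  by rewrite -!addrA; congr (_ + _); rewrite addrC -addrA; congr (_ + _); rewrite addrC.
have -> : x' + y' + (k' + l') = (x' + k') + (y' + l').
  by rewrite -!addrA; congr (_ + _); rewrite addrC -addrA; congr (_ + _); rewrite addrC.
by rewrite e1 e2.
Qed.

Lemma kcongrZ (r : R) x x' : kcongr K x x' -> kcongr K (r *: x) (r *: x').
Proof.
case=> k [k' [Hk [Hk' e1]]]; exists (r *: k), (r *: k'); split; first exact: smemZ.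
by split; [exact: smemZ|rewrite -!scalerDr e1].
Qed.

Lemma qprojP x y : qproj x = qproj y <-> kcongr K x y.
Proof.
split=> [e|h].
  have : kcongr K y y by exact: kcongr_refl.
  have -> : kcongr K y = kcongr K x by move: e => /(congr1 (@proj1_sig _ _)).
  by [].
apply: eq_exist; apply: funext => z; apply: propext; split.
  by apply: kcongr_trans; apply: kcongr_sym.
exact: kcongr_trans.
Qed.

Lemma qrepK C : qproj (qrep C) = C.
Proof.
rewrite /qrep; case: (cid (proj2_sig C)) => x e /=.
by case: C e => C pC /= e; apply: eq_exist.
Qed.

Lemma qrep_congr x : kcongr K (qrep (qproj x)) x.
Proof. by apply/qprojP; rewrite qrepK. Qed.

Definition qzero : quot := qproj 0.
Definition qadd (C D : quot) : quot := qproj (qrep C + qrep D).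
Definition qscale (r : R) (C : quot) : quot := qproj (r *: qrep C).

Lemma qprojD x y : qproj (x + y) = qadd (qproj x) (qproj y).
Proof. by apply/qprojP/kcongr_sym/kcongrD; apply: qrep_congr. Qed.

Lemma qprojZ r x : qproj (r *: x) = qscale r (qproj x).
Proof. by apply/qprojP/kcongr_sym/kcongrZ; apply: qrep_congr. Qed.

Lemma qaddA : associative qadd.
Proof.
by move=> C D E; rewrite -(qrepK C) -(qrepK D) -(qrepK E) -!qprojD addrA.
Qed.

Lemma qaddC : commutative qadd.
Proof. by move=> C D; rewrite -(qrepK C) -(qrepK D) -!qprojD addrC. Qed.

Lemma qadd0 : left_id qzero qadd.
Proof. by move=> C; rewrite -(qrepK C) /qzero -qprojD add0r. Qed.

HB.instance Definition _ := gen_eqMixin quot.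
HB.instance Definition _ := gen_choiceMixin quot.
HB.instance Definition _ := GRing.isNmodule.Build quot qaddA qaddC qadd0.

Lemma qscaleA a b (C : quot) : qscale a (qscale b C) = qscale (a * b) C.
Proof. by rewrite -(qrepK C) -!qprojZ scalerA. Qed.

Lemma qscale0 (C : quot) : qscale 0 C = 0.
Proof. by rewrite -(qrepK C) -qprojZ scale0r. Qed.

Lemma qscale1 : left_id 1 qscale.
Proof. by move=> C; rewrite -(qrepK C) -qprojZ scale1r. Qed.

Lemma qscaleDr : right_distributive qscale +%R.
Proof.
move=> r C D; rewrite -(qrepK C) -(qrepK D) /GRing.add /=.
by rewrite -qprojD -!qprojZ -qprojD scalerDr.
Qed.

Lemma qscaleDl (C : quot) : {morph qscale^~ C : a b / a + b}.
Proof.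
by move=> a b; rewrite -(qrepK C) /GRing.add /= -!qprojZ -qprojD scalerDl.
Qed.

HB.instance Definition _ :=
  GRing.Nmodule_isLSemiModule.Build R quot qscaleA qscale0 qscale1 qscaleDr qscaleDl.

End Quotient.

Definition is_equalizer_of_zero (K N L : lSemiModType R)
    (f : {linear K -> N}) (g : {linear N -> L}) : Prop :=
  (forall x, g (f x) = 0) /\
  forall (X : lSemiModType R) (h : {linear X -> N}),
    (forall x, g (h x) = 0) ->
    exists u : {linear X -> K},
      (forall x, f (u x) = h x) /\
      (forall v : {linear X -> K}, (forall x, f (v x) = h x) -> forall x, v x = u x).

Definition is_coequalizer_of_zero (L M N : lSemiModType R)
    (f : {linear M -> N}) (g : {linear L -> M}) : Prop :=
  (forall x, f (g x) = 0) /\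
  forall (X : lSemiModType R) (h : {linear M -> X}),
    (forall x, h (g x) = 0) ->
    exists u : {linear N -> X},
      (forall x, u (f x) = h x) /\
      (forall v : {linear N -> X}, (forall x, v (f x) = h x) -> forall y, v y = u y).

Definition normal_mono (M N : lSemiModType R) (f : {linear M -> N}) : Prop :=
  exists (L : lSemiModType R) (g : {linear N -> L}), is_equalizer_of_zero f g.

Definition normal_epi (M N : lSemiModType R) (f : {linear M -> N}) : Prop :=
  exists (L : lSemiModType R) (g : {linear L -> M}), is_coequalizer_of_zero f g.

Definition is_iso (A B : lSemiModType R) (phi : {linear A -> B}) : Prop :=
  exists psi : {linear B -> A},
    (forall x, psi (phi x) = x) /\ (forall y, phi (psi y) = y).

End Defs.

(* Main.v *)
Require Import Defs.
From HB Require Import structures.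
From mathcomp Require Import all_boot all_algebra.
From mathcomp Require Import boolp.
Import GRing.Theory.
Local Open Scope ring_scope.
Set Implicit Arguments. Unset Strict Implicit.
Section MkL.
Variables (R : comPzSemiRingType) (U V : lSemiModType R).
Definition mkL (f : U -> V) (fD : {morph f : x y / x + y})
  (fZ : forall (a : R) x, f (a *: x) = a *: f x) : U -> V := f.
Variables (f : U -> V) (fD : {morph f : x y / x + y})
  (fZ : forall (a : R) x, f (a *: x) = a *: f x).
HB.instance Definition _ := GRing.isSemilinear.Build R U V *:%R (@mkL f fD fZ) (fZ, fD).
Definition mkLin : {linear U -> V} := @mkL f fD fZ.
Lemma mkLinE x : mkLin x = f x. Proof. by []. Qed.
End MkL.

Section Sub.
Variables (R : comPzSemiRingType) (M : lSemiModType R) (K : submodule M).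
Definition subT : Type := {x : M | K x}.
HB.instance Definition _ := gen_eqMixin subT.
HB.instance Definition _ := gen_choiceMixin subT.
Definition s0 : subT := exist _ 0 (smem0 K).
Definition sadd (a b : subT) : subT := exist _ (proj1_sig a + proj1_sig b)
  (smemD (proj2_sig a) (proj2_sig b)).
Definition sscale (r : R) (a : subT) : subT := exist _ (r *: proj1_sig a)
  (smemZ r (proj2_sig a)).
Lemma saddA : associative sadd.
Proof. by move=> a b c; apply: eq_exist; rewrite /= addrA. Qed.
Lemma saddC : commutative sadd.
Proof. by move=> a b; apply: eq_exist; rewrite /= addrC. Qed.
Lemma sadd0 : left_id s0 sadd.
Proof. by move=> a; case: a => a Ha; apply: eq_exist; rewrite /= add0r. Qed.
HB.instance Definition _ := GRing.isNmodule.Build subT saddA saddC sadd0.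
Lemma sscaleA a b (c : subT) : sscale a (sscale b c) = sscale (a * b) c.
Proof. by apply: eq_exist; rewrite /= scalerA. Qed.
Lemma sscale0 (c : subT) : sscale 0 c = 0.
Proof. by apply: eq_exist; rewrite /= scale0r. Qed.
Lemma sscale1 : left_id 1 sscale.
Proof. by move=> c; case: c => c Hc; apply: eq_exist; rewrite /= scale1r. Qed.
Lemma sscaleDr : right_distributive sscale +%R.
Proof. by move=> r a b; apply: eq_exist; rewrite /= scalerDr. Qed.
Lemma sscaleDl (c : subT) : {morph sscale^~ c : a b / a + b}.
Proof. by move=> a b; apply: eq_exist; rewrite /= scalerDl. Qed.
HB.instance Definition _ :=
  GRing.Nmodule_isLSemiModule.Build R subT sscaleA sscale0 sscale1 sscaleDr sscaleDl.
Definition sval_lin : {linear subT -> M} :=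
  @mkLin R subT M (fun a => proj1_sig a) (fun a b => erefl) (fun r a => erefl).
End Sub.
Section Aux.
Variables (R : comPzSemiRingType) (M : lSemiModType R).

Definition rayL (x : M) : {linear R^o -> M} :=
  @mkLin R R^o M (fun r : R^o => r *: x) (fun a b => ltac:(by rewrite /= scalerDl))
    (fun a b => ltac:(by rewrite /= scalerA)).
Lemma rayLE x r : rayL x r = r *: x. Proof. by []. Qed.

Variables (N : lSemiModType R) (f : {linear M -> N}).
Definition imgS : submodule N.
refine (@Submodule R N (fun y => exists x, f x = y) _ _ _).
- by exists 0; rewrite linear0.
- by move=> _ _ [a <-] [b <-]; exists (a + b); rewrite linearD.
- by move=> r _ [a <-]; exists (r *: a); rewrite linearZ_LR.
Defined.
Definition kerS : submodule M.
refine (@Submodule R M (fun x => f x = 0) _ _ _).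
- by rewrite linear0.
- by move=> x y /= hx hy; rewrite linearD hx hy addr0.
- by move=> r x /= hx; rewrite linearZ_LR hx scaler0.
Defined.

Lemma kcongr_map (K : submodule M) (h : {linear M -> N}) x y :
  (forall k, K k -> h k = 0) -> kcongr K x y -> h x = h y.
Proof.
move=> hK [k [k' [Hk [Hk' e]]]].
have := congr1 h e; rewrite !linearD (hK _ Hk) (hK _ Hk') !addr0 //.
Qed.
End Aux.

Section QLin.
Variables (R : comPzSemiRingType) (M : lSemiModType R) (K : submodule M).
Definition qprojL : {linear M -> quot K} :=
  @mkLin R M (quot K) (qproj K) (qprojD K) (qprojZ K).
Lemma qproj0 x : K x -> qproj K x = 0.
Proof.
move=> Kx; apply/qprojP; exists 0, x; split; first exact: smem0.
by split=> //; rewrite addr0 add0r.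
Qed.
Variables (N : lSemiModType R) (h : {linear M -> N}).
Hypothesis hK : forall k, K k -> h k = 0.
Definition qlift_fun (C : quot K) : N := h (qrep C).
Lemma qliftE x : qlift_fun (qproj K x) = h x.
Proof. rewrite /qlift_fun; exact: (kcongr_map hK (qrep_congr K x)). Qed.
Lemma qliftD : {morph qlift_fun : x y / x + y}.
Proof.
move=> C D; rewrite -(qrepK C) -(qrepK D).
by rewrite -[_ + _](qprojD K) !qliftE linearD.
Qed.
Lemma qliftZ (a : R) C : qlift_fun (a *: C) = a *: qlift_fun C.
Proof.
by rewrite -(qrepK C) -[_ *: _](qprojZ K) !qliftE linearZ.
Qed.
Definition qliftL : {linear quot K -> N} := mkLin qliftD qliftZ.
Lemma qliftLE C : qliftL C = qlift_fun C. Proof. by []. Qed.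
End QLin.

Theorem mainTheorem9 (R : comPzSemiRingType) (M N : lSemiModType R)
    (f : {linear M -> N}) :
  (normal_mono f <->
     injective f /\ saturated (fun y : N => exists x : M, f x = y)) /\
  (normal_epi f <->
     exists K : submodule M,
       saturated K /\
       exists phi : {linear quot K -> N},
         is_iso phi /\ forall x : M, f x = phi (qproj K x)).
Proof.
split; split.
- move=> [L [g [gf univ]]]; split.
  + move=> x y e.
    have hg : forall r, g (rayL (f x) r) = 0.
      by move=> r; rewrite rayLE linearZ_LR gf scaler0.
    have [u [_ uu]] := univ _ _ hg.
    have e1 := uu (rayL x) (fun r => ltac:(by rewrite !rayLE linearZ_LR)) 1.
    have e2 := uu (rayL y) (fun r => ltac:(by rewrite !rayLE linearZ_LR e)) 1.
    by rewrite -[x]scale1r -[y]scale1r -(rayLE x) -(rayLE y) e1 e2.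
  + move=> x y [a ea] [b eb]; rewrite -eb in ea.
    have gx : g x = 0.
      by have := gf a; rewrite ea linearD gf addr0.
    have hg : forall r, g (rayL x r) = 0.
      by move=> r; rewrite rayLE linearZ_LR gx scaler0.
    have [u [uf _]] := univ _ _ hg.
    by exists (u 1); rewrite uf rayLE scale1r.
- move=> [inj sat]; exists (quot (imgS f)), (qprojL (imgS f)); split.
    by move=> x; rewrite /qprojL mkLinE; apply: qproj0; exists x.
  move=> X h hg.
  have Himg : forall x, exists m, f m = h x.
    move=> x; have := hg x; rewrite /qprojL mkLinE => e.
    have : kcongr (imgS f) (h x) 0.
      by apply/(qprojP (imgS f)); rewrite e.
    case=> k [k' [Hk [Hk' ek]]].
    apply: (sat _ k) => //; rewrite ek add0r //.
  pose u0 x := projT1 (cid (Himg x)).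
  have u0E x : f (u0 x) = h x := projT2 (cid (Himg x)).
  have u0D : {morph u0 : x y / x + y}.
    by move=> x y; apply: inj; rewrite linearD !u0E linearD.
  have u0Z : forall (a : R) x, u0 (a *: x) = a *: u0 x.
    by move=> a x; apply: inj; rewrite linearZ_LR !u0E linearZ_LR.
  exists (mkLin u0D u0Z); split; first by move=> x; rewrite mkLinE.
  by move=> v hv x; apply: inj; rewrite hv mkLinE u0E.
- move=> [L [g [fg univ]]]; exists (kerS f); split.
    by move=> x y /= e hy; move: e; rewrite linearD hy addr0.
  have hK : forall k, kerS f k -> f k = 0 by [].
  exists (qliftL hK).
  have hq : forall x, qprojL (kerS f) (g x) = 0.
    by move=> x; rewrite /qprojL mkLinE; apply: qproj0.
  have [psi [psif _]] := univ _ _ hq.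
  have [u' [_ uu]] := univ _ _ fg.
  split; last by move=> x; rewrite qliftLE qliftE.
  exists psi; split.
    move=> C; rewrite qliftLE /qlift_fun.
    by have := psif (qrep C); rewrite /qprojL mkLinE qrepK.
  move=> y.
  have e1 := uu (qliftL hK \o psi) (fun x => ltac:(by rewrite /= psif /qprojL mkLinE; exact: qliftE)) y.
  have e2 := uu idfun (fun x => erefl) y.
  by rewrite -[RHS]/(idfun y) e2 -e1.
- move=> [K [sat [phi [[psi [h1 h2]] fe]]]].
  exists (subT K), (sval_lin K); split.
    move=> [k Kk]; rewrite fe /sval_lin mkLinE /= qproj0 // linear0 //.
  move=> X h hg.
  have hK : forall k, K k -> h k = 0.
    by move=> k Kk; have := hg (exist _ k Kk); rewrite /sval_lin mkLinE.
  exists (qliftL hK \o psi); split.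
    by move=> x; rewrite /= fe h1 qliftLE qliftE.
  move=> v hv y; rewrite /= -(h2 y) h1 -(qrepK (psi y)) -fe hv qliftLE qliftE //.
Qed.
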